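(* Fix a slot $n$ and a state $(\mathbf x(n),\mathbf g(n))$ of the model in the context. Let $\pi\in\Pi$ choose the feasible withdrawal vector $\mathbf y(n)$ at slot $n$, let $\mathbf y^{MB}(n)$ be the withdrawal vector chosen by an MB policy at the same slot in the same state, and let $\mathbf D=\mathbf y^{MB}(n)-\mathbf y(n)\in\mathbb Z^{L+1}$. Then (a) if $\mathbf D=0$, $\pi$ has the MB property at time $n$; and (b) if $\pi$ has the MB property at time $n$, every component of $\mathbf D$ equals $0$, $+1$ or $-1$.
   Context: Model: slotted time; real queues $1,\dots,L$, dummy queue $0$, $K$ identical servers. In slot $n$ the state is $(\mathbf x(n),\mathbf g(n))$: $x_i(n)\in\mathbb Z_+$ queue lengths ($x_0=0$), $g_{i,j}(n)\in\{0,1\}$ connectivity of queue $i$ to server $j$, with $g_{0,j}=1$. A scheduling control $\mathbf q\in\{0,\dots,L\}^K$ assigns server $j$ to queue $q_j$ ($0$ = idle); it is feasible if $g_{q_j,j}=1$ for all $j$ and for each $i\ge1$ at most $x_i$ servers are assigned to $i$. Its withdrawal vector is $y_i=\#\{j:q_j=i\}$, $i=0,\dots,L$; feasible withdrawal vectors are those arising from feasible $\mathbf q$; their set is $\mathcal Y(\mathbf x,\mathbf g)$. A policy chooses at each slot a feasible withdrawal vector as a measurable function of the history; $\Pi$ is the set of policies. Updated sizes: $\hat x_i(n)=x_i(n)-y_i(n)$ (so $\hat x_0(n)=-y_0(n)$). Imbalance index: $\kappa_n(\pi)=\sum_{i=1}^{L}\sum_{j=i+1}^{L+1}(\hat x_{[i]}(n)-\hat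 x_{[j]}(n))$, where $[1],\dots,[L]$ order the real queues by non-increasing $\hat x$ and $[L+1]=0$. $\pi$ has the MB property at time $n$ if its $\mathbf y(n)$ minimizes $\kappa_n$ over $\mathcal Y(\mathbf x(n),\mathbf g(n))$; an MB policy has the MB property at every slot. *)

(* Defs.v *)
From mathcomp Require Import all_boot all_order all_algebra.
Set Implicit Arguments. Unset Strict Implicit. Unset Printing Implicit Defensive.
Import Order.TTheory GRing.Theory Num.Theory.
Local Open Scope ring_scope.

(* Queues are indexed by 'I_(L.+1): index ord0 is the dummy queue 0,
   indices 1..L are the real queues. Servers are indexed by 'I_K.
   x : queue lengths, g : connectivity (g i j = queue i connected to server j). *)

Definition feasible_control (L K : nat) (x : 'I_L.+1 -> nat)
  (g : 'I_L.+1 -> 'I_K -> bool) (q : 'I_K -> 'I_L.+1) : Prop :=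
  (forall j : 'I_K, g (q j) j) /\
  (forall i : 'I_L.+1, i != ord0 -> (#|[pred j | q j == i]| <= x i)%N).

Definition withdrawal (L K : nat) (q : 'I_K -> 'I_L.+1) : 'I_L.+1 -> nat :=
  fun i => #|[pred j | q j == i]|.

Definition feasible_withdrawal (L K : nat) (x : 'I_L.+1 -> nat)
  (g : 'I_L.+1 -> 'I_K -> bool) (y : 'I_L.+1 -> nat) : Prop :=
  exists q : 'I_K -> 'I_L.+1,
    feasible_control x g q /\ forall i, y i = withdrawal q i.

(* updated sizes  xhat_i = x_i - y_i  (in int; xhat_0 = -y_0 since x_0 = 0) *)
Definition xhat (L : nat) (x y : 'I_L.+1 -> nat) (i : 'I_L.+1) : int :=
  (x i)%:Z - (y i)%:Z.

(* Imbalance index: sort the real queues by non-increasing xhat, append the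
   dummy queue 0 as position L+1, and sum xhat_[i] - xhat_[j] over
   1 <= i <= L, i < j <= L+1 (0-based positions below). *)
Definition imbalance (L : nat) (x y : 'I_L.+1 -> nat) : int :=
  let s := sort (fun a b : int => b <= a)
             [seq xhat x y i | i <- enum 'I_L.+1 & i != ord0] in
  let s' := rcons s (xhat x y ord0) in
  \sum_(0 <= i < L) \sum_(i.+1 <= j < L.+1) (s'`_i - s'`_j).

Definition MB_property (L K : nat) (x : 'I_L.+1 -> nat)
  (g : 'I_L.+1 -> 'I_K -> bool) (y : 'I_L.+1 -> nat) : Prop :=
  feasible_withdrawal x g y /\
  forall y' : 'I_L.+1 -> nat, feasible_withdrawal x g y' ->
    imbalance x y <= imbalance x y'.

(* Main.v *)
Require Import Defs.
From mathcomp Require Import all_boot all_order all_algebra.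
From mathcomp Require Import zify ring lra.
From Stdlib Require Import FunctionalExtensionality.
Import Order.TTheory GRing.Theory Num.Theory.
Local Open Scope ring_scope.

Section NatPart.
Local Open Scope nat_scope.

Definition upd {K L : nat} (q : 'I_K -> 'I_L.+1) (j0 : 'I_K) (c : 'I_L.+1) :=
  fun j => if j == j0 then c else q j.

Lemma w_upd {K L : nat} (q : 'I_K -> 'I_L.+1) j0 a c :
  q j0 = a -> forall d,
  (withdrawal (upd q j0 c) d + (d == a) = withdrawal q d + (d == c))%N.
Proof.
move=> Hq d; rewrite /withdrawal.
rewrite (cardD1 j0) [in RHS](cardD1 j0) !inE /upd eqxx Hq.
have -> : #|[predD1 [pred j | (if j == j0 then c else q j) == d] & j0]|
        = #|[predD1 [pred j | q j == d] & j0]|.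
  by apply: eq_card => j; rewrite !inE; case: (j == j0).
rewrite [c == d]eq_sym [a == d]eq_sym; set R := #|[predD1 [pred j | q j == d] & j0]|; lia.
Qed.

Lemma exch {K L : nat} (n : nat) : forall (q q' : 'I_K -> 'I_L.+1) (a : 'I_L.+1),
  (#|[pred j | q j != q' j]| <= n)%N ->
  (withdrawal q' a < withdrawal q a)%N ->
  exists b, [/\ b != a, (withdrawal q b < withdrawal q' b)%N,
     exists q1, (forall j, q1 j = q j \/ q1 j = q' j) /\
        forall d, (withdrawal q1 d + (d == a) = withdrawal q d + (d == b))%N &
     exists q2, (forall j, q2 j = q j \/ q2 j = q' j) /\
        forall d, (withdrawal q2 d + (d == b) = withdrawal q' d + (d == a))%N].
Proof.
elim: n => [|n IH] q q' a Hn Hw.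
  exfalso.
  have : [pred j | q j == a] \subset [pred j | q' j == a].
    apply/subsetP => j; rewrite !inE => /eqP Hj.
    apply/negPn/negP => Hne.
    have : (0 < #|[pred j | q j != q' j]|)%N.
      by apply/card_gt0P; exists j; rewrite inE Hj eq_sym.
    lia.
  move/subset_leq_card; by rewrite /withdrawal leqNgt Hw.
have [j /andP[/eqP Hqj Hq'j]] : exists j, (q j == a) && (q' j != a).
  apply/existsP; apply: contraT => /existsPn Hne.
  have : [pred j | q j == a] \subset [pred j | q' j == a].
    apply/subsetP => j; rewrite !inE => Hj.
    by move: (Hne j); rewrite Hj /= negbK.
  move/subset_leq_card; by rewrite /withdrawal leqNgt Hw.
set c := q' j.
have Hca : c != a by [].
have Hup := w_upd q j a c Hqj.
have Hup' := w_upd q' j c a erefl.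
case: (ltnP (withdrawal q c) (withdrawal q' c)) => Hc.
  exists c; split => //.
    exists (upd q j c); split => // j'; rewrite /upd.
    by case: (j' == j) /eqP => [->|]; [right | left].
  exists (upd q' j a); split => [j'|d]; last first.
    exact: Hup' d.
  rewrite /upd; case: (j' == j) /eqP => [->|]; [left | right] => //.
set q2 := upd q j c.
have Hq2c : (withdrawal q' c < withdrawal q2 c)%N.
  by move: (Hup c); rewrite /q2 eqxx (negbTE Hca); lia.
have Hmeas : (#|[pred j | q2 j != q' j]| <= n)%N.
  have Hsub : [pred j0 | q2 j0 != q' j0] \subset [predD1 [pred j0 | q j0 != q' j0] & j].
    apply/subsetP => j0; rewrite !inE /q2 /upd.
    by case: (j0 == j) /eqP => [->|_]; rewrite ?eqxx.
  move/subset_leq_card: Hsub.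
  move: Hn; rewrite [X in (X <= _)%N -> _](cardD1 j) inE Hqj eq_sym Hca.
  move=> H1 H2; apply: (leq_trans H2); exact: H1.
have [b [Hbc Hb [q3 [Hq3 Hw3]] [q4 [Hq4 Hw4]]]] := IH q2 q' c Hmeas Hq2c.
have Hba : b != a.
  apply/negP => /eqP Eb; subst b.
  have Hac : a != c by rewrite eq_sym.
  move: (Hup a) Hb; rewrite eqxx (negbTE Hac) /q2; lia.
have Hqb : withdrawal q2 b = withdrawal q b.
  by move: (Hup b); rewrite /q2 (negbTE Hba) (negbTE Hbc); lia.
exists b; split => //.
  by rewrite -Hqb.
  exists q3; split.
    move=> j0; case: (Hq3 j0) => ->; last by right.
    rewrite /q2 /upd; case: (j0 == j) /eqP => [->|]; [right | left] => //.
  by move=> d; move: (Hw3 d) (Hup d); rewrite /q2; lia.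
have Hq4j : q4 j = c.
  by case: (Hq4 j) => ->; rewrite /q2 /upd ?eqxx.
have Hup4 := w_upd q4 j c a Hq4j.
exists (upd q4 j a); split.
  move=> j0; rewrite /upd; case: (j0 == j) /eqP => [->|Hne]; first by left.
  case: (Hq4 j0) => ->; last by right.
  by rewrite /q2 /upd; move/eqP/negbTE: Hne => ->; left.
by move=> d; move: (Hw4 d) (Hup4 d); lia.
Qed.

End NatPart.

Definition Tn (w : seq int) (n : nat) : int :=
  \sum_(0 <= i < n) \sum_(i.+1 <= j < n.+1) (w`_i - w`_j).

Lemma Tn_cons (x : int) w n :
  Tn (x :: w) n.+1 = \sum_(0 <= j < n.+1) (x - w`_j) + Tn w n.
Proof.
rewrite /Tn big_ltn // big_add1 /=.
congr (_ + _).
  by rewrite big_add1 /=.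
apply: eq_bigr => i _.
by rewrite big_add1 /=.
Qed.

Definition Dl (s : seq int) : int := \sum_(u <- s) \sum_(v <- s) `|u - v|.

Lemma T_sorted (h0 : int) (s : seq int) :
  sorted (fun a b : int => b <= a) s ->
  (Tn (rcons s h0) (size s)) *+ 2 = Dl s + (\sum_(u <- s) (u - h0)) *+ 2.
Proof.
elim: s => [|x s IH] Hs.
  by rewrite /Tn /Dl /= big_geq // !big_nil.
have Hs' : sorted (fun a b : int => b <= a) s by case: s {IH} Hs => //= y s /andP[].
have Hx : all (fun v => v <= x) s.
  apply: (order_path_min (leT := fun a b : int => b <= a)) => //.
  by move=> a b c /= H1 H2; apply: le_trans H2 H1.
rewrite /= Tn_cons mulrnDl IH //.
have -> : \sum_(0 <= j < (size s).+1) (x - (rcons s h0)`_j)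
   = \sum_(v <- s) `|x - v| + (x - h0).
  rewrite -(size_rcons s h0) -(big_nth 0 predT (fun v => x - v)) /=.
  rewrite -cats1 big_cat /= big_seq1; congr (_ + _).
  rewrite big_seq_cond [RHS]big_seq_cond; apply: eq_bigr => v /andP[Hv _].
  by rewrite ger0_norm // subr_ge0; move/allP: Hx => /(_ v Hv).
rewrite /Dl !big_cons subrr normr0 add0r.
have -> : \sum_(u <- s) \sum_(v <- x :: s) `|u - v|
   = \sum_(v <- s) `|x - v| + \sum_(u <- s) \sum_(v <- s) `|u - v|.
  under eq_bigr do rewrite big_cons.
  rewrite big_split /=; congr (_ + _); apply: eq_bigr => u _; exact: distrC.
rewrite !mulrnDl; lra.
Qed.

Definition Kp {L : nat} (h : 'I_L.+1 -> int) : int :=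
  \sum_(c | c != ord0) \sum_(d | d != ord0) `|h c - h d|
  + (\sum_(c | c != ord0) (h c - h ord0)) *+ 2.

Lemma imb2 (L : nat) (x y : 'I_L.+1 -> nat) :
  (imbalance x y) *+ 2 = Kp (xhat x y).
Proof.
set hs := [seq xhat x y i | i <- enum 'I_L.+1 & i != ord0].
set s := sort (fun a b : int => b <= a) hs.
have Hsz : size s = L.
  rewrite size_sort -sum1_size /hs big_map big_filter big_enum_cond /=.
  rewrite sum1_card.
  have -> : #|[pred i : 'I_L.+1 | (i \in 'I_L.+1) && (i != ord0)]| = #|predC1 (@ord0 L)|.
    by apply: eq_card => i; rewrite !inE.
  by rewrite cardC1 card_ord.
set h0 := xhat x y ord0.
have -> : imbalance x y = Tn (rcons s h0) L by [].
have -> : Tn (rcons s h0) L = Tn (rcons s h0) (size s) by rewrite Hsz.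
rewrite T_sorted; last first.
  apply: sort_sorted => a b /=; exact: le_total.
have Pm : perm_eq s hs by rewrite /s perm_sort.
rewrite /Dl /Kp (perm_big _ Pm) /=.
rewrite (perm_big _ Pm) /=.
under eq_bigr do rewrite (perm_big _ Pm) /hs big_map big_filter big_enum_cond /=.
rewrite /hs !big_map !big_filter !big_enum_cond /=.
congr (_ + _); apply: eq_bigcond => i; by rewrite inE.
Qed.

Definition Full {I : finType} (h : I -> int) : int :=
  \sum_c \sum_d `|h c - h d|.

Lemma Full_split {L : nat} (h : 'I_L.+1 -> int) :
  Full h = \sum_(c | c != ord0) \sum_(d | d != ord0) `|h c - h d|
     + (\sum_(c | c != ord0) `|h c - h ord0|) *+ 2.
Proof.
rewrite /Full (bigD1 ord0) //= (bigD1 ord0) //= subrr normr0 add0r.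
under [X in _ + X = _]eq_bigr => c _ do rewrite (bigD1 ord0) //=.
rewrite big_split /= mulr2n.
have -> : \sum_(i | i != ord0) `|h ord0 - h i| = \sum_(c | c != ord0) `|h c - h ord0|.
  by apply: eq_bigr => i _; rewrite distrC.
lra.
Qed.

Lemma Kp_le_Full {L : nat} (h : 'I_L.+1 -> int) : Kp h <= Full h.
Proof.
rewrite Full_split /Kp lerD2l lerMn2r /=.
apply: ler_sum => c _; exact: ler_norm.
Qed.

Lemma Kp_eq_Full {L : nat} (h : 'I_L.+1 -> int) :
  (forall c, h ord0 <= h c) -> Kp h = Full h.
Proof.
move=> H; rewrite Full_split /Kp; congr (_ + _ *+ 2).
apply: eq_bigr => c _; rewrite ger0_norm // subr_ge0; exact: H.
Qed.

Lemma sum_ab {I : finType} (a b : I) (G : I -> int) : a != b ->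
  \sum_c G c = G a + G b + \sum_(c | (c != a) && (c != b)) G c.
Proof.
move=> Hab; rewrite (bigD1 a) //= (bigD1 b) /=; last by rewrite eq_sym.
rewrite addrA; congr (_ + _); apply: eq_bigcond => c; by rewrite andbC.
Qed.

Lemma Full_transfer {I : finType} (h h' : I -> int) (a b : I) :
  a != b -> h' a = h a + 1 -> h' b = h b - 1 ->
  (forall c, c != a -> c != b -> h' c = h c) -> h a + 2 <= h b ->
  Full h' < Full h.
Proof.
move=> Hab Ha Hb Hc Hle.
pose E (k : I -> int) : int := `|k a - k a| + `|k a - k b| + `|k b - k a| + `|k b - k b|
  + (\sum_(d | (d != a) && (d != b)) (`|k a - k d| + `|k b - k d|)
  + \sum_(d | (d != a) && (d != b)) (`|k a - k d| + `|k b - k d|))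
  + \sum_(c | (c != a) && (c != b)) \sum_(d | (d != a) && (d != b)) `|k c - k d|.
have FE k : Full k = E k.
  rewrite /Full /E (sum_ab a b _ Hab) (sum_ab a b _ Hab) (sum_ab a b _ Hab).
  under [X in _ + X = _]eq_bigr => c _ do rewrite (sum_ab a b _ Hab).
  rewrite !big_split /=.
  have -> : \sum_(i | (i != a) && (i != b)) `|k i - k a| = \sum_(i | (i != a) && (i != b)) `|k a - k i|.
    by apply: eq_bigr => i _; rewrite distrC.
  have -> : \sum_(i | (i != a) && (i != b)) `|k i - k b| = \sum_(i | (i != a) && (i != b)) `|k b - k i|.
    by apply: eq_bigr => i _; rewrite distrC.
  lra.
rewrite !FE /E.
have S2 : \sum_(c | (c != a) && (c != b)) \sum_(d | (d != a) && (d != b)) `|h' c - h' d|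
   = \sum_(c | (c != a) && (c != b)) \sum_(d | (d != a) && (d != b)) `|h c - h d|.
  apply: eq_bigr => c /andP[c1 c2]; apply: eq_bigr => d /andP[d1 d2].
  by rewrite !Hc.
have S1 : \sum_(d | (d != a) && (d != b)) (`|h' a - h' d| + `|h' b - h' d|)
   <= \sum_(d | (d != a) && (d != b)) (`|h a - h d| + `|h b - h d|).
  apply: ler_sum => d /andP[d1 d2]; rewrite (Hc d) // Ha Hb.
  lia.
rewrite S2 !subrr !normr0 Ha Hb.
rewrite Ha Hb in S1.
lia.
Qed.

Lemma feas_cap {L K : nat} (x : 'I_L.+1 -> nat) (g : 'I_L.+1 -> 'I_K -> bool) y :
  feasible_withdrawal x g y -> forall c, c != ord0 -> (y c <= x c)%N.
Proof. by move=> [q [[_ Hc] Hy]] c Hc0; rewrite Hy; exact: Hc. Qed.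

Lemma imb_transfer {L K : nat} (x : 'I_L.+1 -> nat) (g : 'I_L.+1 -> 'I_K -> bool)
  (y z : 'I_L.+1 -> nat) a b :
  x ord0 = 0%N -> feasible_withdrawal x g y -> a != b ->
  (forall d, z d + (d == a) = y d + (d == b))%N ->
  xhat x y a + 2 <= xhat x y b -> imbalance x z < imbalance x y.
Proof.
move=> Hx0 Hf Hab Hz Hle.
have Hlt : Full (xhat x z) < Full (xhat x y).
  apply: (@Full_transfer _ (xhat x y) (xhat x z) a b Hab).
  - move: (Hz a); rewrite eqxx (negbTE Hab) /xhat; lia.
  - have Hba : b != a by rewrite eq_sym.
    move: (Hz b); rewrite eqxx (negbTE Hba) /xhat; lia.
  - move=> c Hca Hcb; move: (Hz c); rewrite (negbTE Hca) (negbTE Hcb) /xhat; lia.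
  - exact: Hle.
have H1 := Kp_le_Full (xhat x z).
have H2 : Kp (xhat x y) = Full (xhat x y).
  apply: Kp_eq_Full => c; rewrite /xhat Hx0.
  case: (eqVneq c ord0) => [->|Hc]; first by rewrite Hx0.
  have := @feas_cap _ _ x g y Hf c Hc; lia.
have := imb2 _ x z; have := imb2 _ x y.
rewrite !mulr2n; lia.
Qed.

Lemma noMB2 {L K : nat} (x : 'I_L.+1 -> nat) (g : 'I_L.+1 -> 'I_K -> bool)
  (y1 y2 : 'I_L.+1 -> nat) a :
  x ord0 = 0%N -> MB_property x g y1 -> MB_property x g y2 ->
  (y2 a + 2 <= y1 a)%N -> False.
Proof.
move=> Hx0 [Hf1 Ho1] [Hf2 Ho2] Hlt.
have Hf1' := Hf1; have Hf2' := Hf2.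
case: Hf1 => q1 [[Hg1 Hc1] Hy1]; case: Hf2 => q2 [[Hg2 Hc2] Hy2].
have Hw : (withdrawal q2 a < withdrawal q1 a)%N by rewrite -Hy1 -Hy2; lia.
have [b [Hba Hb [qq1 [Hqq1 Hw1]] [qq2 [Hqq2 Hw2]]]] :=
  @exch K L #|'I_K| q1 q2 a (max_card _) Hw.
rewrite -Hy1 -Hy2 in Hb.
have Hab : a != b by rewrite eq_sym.
have Fz1 : feasible_withdrawal x g (withdrawal qq1).
  exists qq1; split => //; split.
    by move=> j; case: (Hqq1 j) => ->.
  move=> i Hi; rewrite -/(withdrawal qq1 i); move: (Hw1 i).
  case: (eqVneq i b) => [Eib|Hib].
    subst i.
    rewrite (negbTE Hba) -Hy1.
    have := Hc2 b Hi; rewrite -/(withdrawal q2 b) -Hy2; lia.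
  rewrite -Hy1 => H.
  have := Hc1 i Hi; rewrite -/(withdrawal q1 i) -Hy1; lia.
have Fz2 : feasible_withdrawal x g (withdrawal qq2).
  exists qq2; split => //; split.
    by move=> j; case: (Hqq2 j) => ->.
  move=> i Hi; rewrite -/(withdrawal qq2 i); move: (Hw2 i).
  case: (eqVneq i a) => [Eia|Hia].
    subst i.
    rewrite (negbTE Hab) -Hy2.
    have := Hc1 a Hi; rewrite -/(withdrawal q1 a) -Hy1; lia.
  rewrite -Hy2 => H.
  have := Hc2 i Hi; rewrite -/(withdrawal q2 i) -Hy2; lia.
have N1 : ~ (xhat x y1 a + 2 <= xhat x y1 b).
  move=> H.
  have Hl := @imb_transfer _ _ x g y1 _ a b Hx0 Hf1' Hab (fun d => etrans (Hw1 d) (congr1 (addn^~ _) (esym (Hy1 d)))) H.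
  by have := Ho1 _ Fz1; rewrite leNgt Hl.
have N2 : ~ (xhat x y2 b + 2 <= xhat x y2 a).
  move=> H.
  have Hl := @imb_transfer _ _ x g y2 _ b a Hx0 Hf2' Hba (fun d => etrans (Hw2 d) (congr1 (addn^~ _) (esym (Hy2 d)))) H.
  by have := Ho2 _ Fz2; rewrite leNgt Hl.
apply: N1; move: N2; rewrite /xhat; lia.
Qed.

Theorem lemma1 (L K : nat) (x : 'I_L.+1 -> nat) (g : 'I_L.+1 -> 'I_K -> bool)
  (y yMB : 'I_L.+1 -> nat) :
  x ord0 = 0%N ->
  (forall j : 'I_K, g ord0 j = true) ->
  feasible_withdrawal x g y ->
  MB_property x g yMB ->
  ((forall i : 'I_L.+1, (yMB i)%:Z - (y i)%:Z = 0) -> MB_property x g y) /\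
  (MB_property x g y ->
     forall i : 'I_L.+1, (yMB i)%:Z - (y i)%:Z \in [:: 0; 1; -1]).
Proof.
move=> Hx0 _ Hf Hmb; split.
  move=> H.
  have -> : y = yMB.
    apply: functional_extensionality => i; move: (H i); lia.
  exact: Hmb.
move=> Hy i.
have N1 : ~ (y i + 2 <= yMB i)%N by move=> H; exact: (@noMB2 _ _ x g yMB y i Hx0 Hmb Hy H).
have N2 : ~ (yMB i + 2 <= y i)%N by move=> H; exact: (@noMB2 _ _ x g y yMB i Hx0 Hy Hmb H).
rewrite !inE; lia.
Qed.
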